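(* Let $E$ be a normed space, $\tau$ a linear topology on $E$ weaker than the norm topology, and $F$ a subspace of $E$. The following are equivalent: (i) $0_E$ is $\tau$-separated from $\mathrm{S}_F$; (ii) $\tau$ coincides with the norm topology on $F$; (iii) $\rho_F$ is $\tau$-complementary on $E$.
   Context: $\mathrm{S}_F$ is the unit sphere of $F$; $0_E$ is $\tau$-separated from $A$ if some $\tau$-neighborhood of $0_E$ is disjoint from $A$. $\rho_F(e)=\inf_{f\in F}\|e-f\|$ is the distance from $e$ to $F$. A continuous semi-norm $\rho$ on $E$ is $\tau$-complementary if there is no net in the unit sphere $\mathrm{S}_E$ which is null both in $\tau$ and in $\rho$. *)

(* Defs.v *)
From HB Require Import structures.
From mathcomp Require Import all_boot all_order all_algebra.
From mathcomp Require Import all_classical all_reals all_analysis.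
Set Implicit Arguments. Unset Strict Implicit. Unset Printing Implicit Defensive.
Import Order.TTheory GRing.Theory Num.Theory.
Import numFieldNormedType.Exports.
Local Open Scope classical_set_scope.
Local Open Scope ring_scope.

Section Defs.
Context {R : realType} {E : normedModType R}.

Definition is_topology (tau : set (set E)) : Prop :=
  [/\ tau setT, tau set0,
      (forall S : set (set E), S `<=` tau -> tau (\bigcup_(A in S) A)) &
      (forall U V, tau U -> tau V -> tau (U `&` V))].

(* [tau] is a linear topology: a topology for which addition
   E x E -> E and scalar multiplication R x E -> E are jointly continuous
   (R with its usual topology, products with the product topology). *)
Definition is_linear_topology (tau : set (set E)) : Prop :=
  [/\ is_topology tau,
      (forall U x y, tau U -> U (x + y) ->
         exists V W, [/\ tau V, V x, tau W, W y &
           forall v w, V v -> W w -> U (v + w)]) &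
      (forall U (a : R) x, tau U -> U (a *: x) ->
         exists (d : R) V, [/\ 0 < d, tau V, V x &
           forall b v, `|b - a| < d -> V v -> U (b *: v)])].

Definition weaker_than_norm (tau : set (set E)) : Prop :=
  forall U, tau U -> open U.

Definition is_subspace (F : set E) : Prop :=
  [/\ F 0, (forall x y, F x -> F y -> F (x + y)) &
      (forall (a : R) x, F x -> F (a *: x))].

Definition unit_sphere (F : set E) : set E := [set x | F x /\ `|x| = 1].

Definition tau_nbhs (tau : set (set E)) (x : E) (N : set E) : Prop :=
  exists U, [/\ tau U, U x & U `<=` N].
Definition zero_tau_separated (tau : set (set E)) (A : set E) : Prop :=
  exists N, tau_nbhs tau 0 N /\ N `&` A = set0.

Definition coincide_on (tau : set (set E)) (F : set E) : Prop :=
  forall A, A `<=` F ->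
    ((exists U, tau U /\ A = U `&` F) <-> (exists U, open U /\ A = U `&` F)).

Definition dist_to (F : set E) (e : E) : R := inf [set `|e - f| | f in F].

Definition continuous_seminorm (rho : E -> R) : Prop :=
  [/\ (forall x, 0 <= rho x),
      (forall x y, rho (x + y) <= rho x + rho y),
      (forall (a : R) x, rho (a *: x) = `|a| * rho x) &
      continuous rho].

Definition directed (D : Type) (le : D -> D -> Prop) : Prop :=
  [/\ exists d : D, True,
      (forall d, le d d),
      (forall a b c, le a b -> le b c -> le a c) &
      (forall a b, exists c, le a c /\ le b c)].

Definition net_tau_null (tau : set (set E)) (D : Type) (le : D -> D -> Prop)
  (x : D -> E) : Prop :=
  forall U, tau U -> U 0 -> exists d0, forall d, le d0 d -> U (x d).

Definition net_rho_null (rho : E -> R) (D : Type) (le : D -> D -> Prop)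
  (x : D -> E) : Prop :=
  forall eps : R, 0 < eps -> exists d0, forall d, le d0 d -> `|rho (x d)| < eps.

Definition tau_complementary (tau : set (set E)) (rho : E -> R) : Prop :=
  continuous_seminorm rho /\
  ~ (exists (D : Type) (le : D -> D -> Prop) (x : D -> E),
       [/\ directed le, (forall d, unit_sphere setT (x d)),
           net_tau_null tau le x & net_rho_null rho le x]).

End Defs.

(* Main.v *)
Require Import Defs.
From HB Require Import structures.
From mathcomp Require Import all_boot all_order all_algebra.
From mathcomp Require Import all_classical all_reals all_analysis.
From mathcomp Require Import lra ring.
Import Order.TTheory GRing.Theory Num.Theory.
Import numFieldNormedType.Exports.
Local Open Scope classical_set_scope.
Local Open Scope ring_scope.

Lemma open_ballsub {R : realType} {E : normedModType R} (U : set E) x :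
  open U -> U x -> exists2 r : R, 0 < r & forall y, `|x - y| < r -> U y.
Proof.
move=> oU Ux; have : nbhs x U by apply: open_nbhs_nbhs; split.
move=> /nbhs_ballP [r r0 H]; exists r => // y xy; apply: H; rewrite -ball_normE /=; exact: xy.
Qed.

Section Dist2.
Context {R : realType} {E : normedModType R} (F : set E).
Hypothesis F0 : F 0.
Hypothesis FD : forall x y, F x -> F y -> F (x + y).
Hypothesis FZ : forall (a : R) x, F x -> F (a *: x).

Lemma dset_ne x : [set `|x - f| | f in F] !=set0.
Proof. by exists `|x - 0|; exists 0. Qed.

Lemma dset_lb x : has_lbound [set `|x - f| | f in F].
Proof. by exists 0 => _ [f _ <-]. Qed.

Lemma dist_le x f : F f -> dist_to F x <= `|x - f|.
Proof. by move=> Ff; apply: (ge_inf (dset_lb x)); exists f. Qed.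

Lemma dist_ge0 x : 0 <= dist_to F x.
Proof. by apply: lb_le_inf; [exact: dset_ne| move=> _ [f _ <-]]. Qed.

Lemma dist_lt x c : dist_to F x < c -> exists2 f, F f & `|x - f| < c.
Proof. by move=> /(inf_lt (dset_ne x)) [_ [f Ff <-] h]; exists f. Qed.

Lemma dist_ge x c : (forall f, F f -> c <= `|x - f|) -> c <= dist_to F x.
Proof. by move=> h; apply: lb_le_inf; [exact: dset_ne| move=> _ [f Ff <-]; apply: h]. Qed.

Lemma dist_F x : F x -> dist_to F x = 0.
Proof. by move=> Fx; apply/eqP; rewrite eq_le dist_ge0 andbT; have := @dist_le x x Fx; rewrite subrr normr0. Qed.

Lemma dist_add x y : dist_to F (x + y) <= dist_to F x + dist_to F y.
Proof.
have h : forall g, F g -> dist_to F (x + y) - `|y - g| <= dist_to F x.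
  move=> g Fg; apply: dist_ge => // f Ff.
  rewrite lerBlDr; have := @dist_le (x + y) _ (FD _ _ Ff Fg); move/le_trans; apply.
  by rewrite (_ : x + y - (f + g) = (x - f) + (y - g)) ?lerDl ?ler_normD //; rewrite opprD addrACA.
have : dist_to F (x + y) - dist_to F x <= dist_to F y.
  apply: dist_ge => // g Fg; have := h g Fg; rewrite !lerBlDr [X in _ <= X]addrC; exact.
by rewrite lerBlDr [dist_to F y + _]addrC.
Qed.

Lemma dist_scale (a : R) x : dist_to F (a *: x) = `|a| * dist_to F x.
Proof.
have [->|a0] := eqVneq a 0.
  by rewrite scale0r normr0 mul0r dist_F.
have na0 : 0 < `|a| by rewrite normr_gt0.
apply/eqP; rewrite eq_le; apply/andP; split.
  rewrite -ler_pdivrMl //; apply: dist_ge => // g Fg.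
  rewrite ler_pdivrMl // -normrZ scalerBr; apply: dist_le; exact: FZ.
apply: dist_ge => // f Ff.
have -> : a *: x - f = a *: (x - a^-1 *: f) by rewrite scalerBr scalerA divff // scale1r.
rewrite normrZ ler_pM2l //; apply: dist_le => //; exact: FZ.
Qed.

Lemma dist_lip x y : dist_to F x <= dist_to F y + `|x - y|.
Proof.
have := dist_add y (x - y); rewrite [y + _]addrC subrK => h.
apply: le_trans h _; rewrite lerD2l.
by have := @dist_le (x - y) 0 F0; rewrite subr0.
Qed.

Lemma dist_cont : continuous (dist_to F).
Proof.
move=> x; apply/cvgrPdist_lt => e e0.
near=> y.
have h1 := dist_lip x y; have h2 := dist_lip y x.
rewrite distrC in h2.
have : `|x - y| < e by near: y; apply: (cvgrPdist_lt _ _).1 => //; exact: cvg_id.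
move=> hxy; rewrite ltr_norml; apply/andP; split; lra.
Unshelve. all: by end_near. Qed.
End Dist2.

Section Topo.
Context {R : realType} {E : normedModType R} (tau : set (set E)) (F : set E).
Hypothesis Hlin : is_linear_topology tau.
Hypothesis Hweak : weaker_than_norm tau.
Hypothesis F0 : F 0.
Hypothesis FD : forall x y, F x -> F y -> F (x + y).
Hypothesis FZ : forall (a : R) x, F x -> F (a *: x).

Lemma tau_pre (P : set E) :
  (forall v, P v -> exists V, [/\ tau V, V v & V `<=` P]) -> tau P.
Proof.
move=> h; case: Hlin => -[_ _ tauU _] _ _.
have -> : P = \bigcup_(A in [set A | tau A /\ A `<=` P]) A.
  apply/seteqP; split=> [v Pv|v [A [_ AP] Av]]; last exact: AP.
  by have [V [tV Vv VP]] := h v Pv; exists V.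
by apply: tauU => A [].
Qed.

Lemma tau_transl U c : tau U -> tau [set v | U (v + c)].
Proof.
move=> tU; apply: tau_pre => v /= Uv; case: Hlin => _ Hadd _.
have [V [W [tV Vv tW Wc H]]] := Hadd U v c tU Uv.
by exists V; split => // w Vw; apply: H.
Qed.

Lemma tau_scale U (a : R) : tau U -> tau [set v | U (a *: v)].
Proof.
move=> tU; apply: tau_pre => v /= Uv; case: Hlin => _ _ Hsc.
have [d [V [d0 tV Vv H]]] := Hsc U a v tU Uv.
by exists V; split => // w Vw; apply: H => //; rewrite subrr normr0.
Qed.

Lemma small_nbhd U0 : tau U0 -> U0 0 ->
  (forall x, U0 x -> F x -> `|x| <> 1) ->
  forall eps : R, 0 < eps -> exists W, [/\ tau W, W 0 &
     forall w, W w -> F w -> `|w| < eps].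
Proof.
move=> tU0 U00 sep eps eps0; case: Hlin => _ _ Hsc.
have U00' : U0 (0 *: 0) by rewrite scale0r.
have [d [V [d0 tV V0 H]]] := Hsc U0 0 0 tU0 U00'.
pose c := 2 / (d * eps).
have c0 : 0 < c by rewrite divr_gt0 // mulr_gt0.
exists [set w | V (c *: w)]; split; first exact: tau_scale.
  by rewrite /= scaler0.
move=> w /= Vw Fw; rewrite ltNge; apply/negP => ew.
have w0 : 0 < `|w| by apply: lt_le_trans ew.
pose b := (c * `|w|)^-1.
have b0 : 0 < b by rewrite invr_gt0 mulr_gt0.
have hb : `|b - 0| < d.
  rewrite subr0 gtr0_norm //.
  have -> : b = (d * eps) / (2 * `|w|).
    rewrite /b /c; field; apply/and3P; split; rewrite ?gt_eqF ?mulr_gt0 //.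
  rewrite ltr_pdivrMr ?mulr_gt0 //; nra.
have := H b (c *: w) hb Vw.
rewrite scalerA => Ub.
apply: (sep _ Ub); first exact: FZ.
rewrite normrZ (gtr0_norm (mulr_gt0 b0 c0)) /b -mulrA mulVf // gt_eqF // (mulr_gt0 c0 w0).
by [].
Qed.

Lemma sep_get : zero_tau_separated tau (unit_sphere F) ->
  exists U0, [/\ tau U0, U0 0 & forall x, U0 x -> F x -> `|x| <> 1].
Proof.
move=> [N [[U [tU U0 UN]] NS]]; exists U; split => // x Ux Fx nx.
have : (N `&` unit_sphere F) x by split; [exact: UN|split].
by rewrite NS.
Qed.

Lemma i_ii : zero_tau_separated tau (unit_sphere F) -> coincide_on tau F.
Proof.
move=> /sep_get [U0 [tU0 U00 sep]] A AF; split.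
  by move=> [U [tU ->]]; exists U; split => //; apply: Hweak.
move=> [V [oV AV]].
case: Hlin => -[_ _ tauU _] _ _.
pose S := [set B | tau B /\ B `&` F `<=` V].
exists (\bigcup_(B in S) B); split; first by apply: tauU => B [].
rewrite AV; apply/seteqP; split => [y [Vy Fy]|y [[B [_ BV] By] Fy]]; last first.
  by split => //; apply: BV.
split => //.
have [r r0 hr] := open_ballsub _ _ oV Vy.
have [W [tW W0 hW]] := small_nbhd _ tU0 U00 sep _ r0.
exists [set z | W (z + - y)]; last by rewrite /= subrr.
split; first exact: tau_transl.
move=> z [/= Wz Fz]; apply: hr; rewrite distrC; apply: hW => //.
by apply: FD => //; rewrite -scaleN1r; apply: FZ.
Qed.

Lemma ii_i : coincide_on tau F -> zero_tau_separated tau (unit_sphere F).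
Proof.
move=> co.
have [U [tU eq]] : exists U, tau U /\ ball (0 : E) 1 `&` F = U `&` F.
  apply/(co (ball 0 1 `&` F)); first by move=> x [].
  by exists (ball 0 1); split => //; exact: ball_open.
have : (U `&` F) 0 by rewrite -eq; split => //; exact: ballxx.
move=> [U0 _]; exists U; split; first by exists U; split.
apply/seteqP; split => // x [Ux [Fx nx]].
have : (ball (0 : E) 1 `&` F) x by rewrite eq.
by move=> [+ _]; rewrite -ball_normE /= sub0r normrN nx ltxx.
Qed.

Lemma i_iii : zero_tau_separated tau (unit_sphere F) ->
  tau_complementary tau (dist_to F).
Proof.
move=> /sep_get [U0 [tU0 U00 sep]]; split.
  split.
  - exact: dist_ge0.
  - exact: dist_add.
  - exact: dist_scale.
  - exact: dist_cont.
move=> [D [le [x [[_ _ _ dir] nx tnull rnull]]]].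
have h2p : (0 : R) < 1 / 2 by [].
have [W [tW W0 hW]] := small_nbhd _ tU0 U00 sep _ h2p.
case: Hlin => _ Hadd _.
have W00 : W (0 + 0) by rewrite addr0.
have [V1 [V2 [tV1 V10 tV2 V20 H]]] := Hadd W 0 0 tW W00.
have [r r0 hr] := open_ballsub _ _ (Hweak _ tV2) V20.
pose del := Num.min r (1 / 2).
have del0 : 0 < del by rewrite lt_min r0.
have delr : del <= r by rewrite ge_min lexx.
have del2 : del <= 1 / 2 by rewrite ge_min lexx orbT.
have [d1 h1] := tnull V1 tV1 V10.
have [d2 h2] := rnull del del0.
have [d [l1 l2]] := dir d1 d2.
have := h2 d l2; rewrite ger0_norm ?dist_ge0 // => /(dist_lt _ F0) [f Ff xf].
have Wf : W f.
  have -> : f = x d + (f - x d) by rewrite addrC subrK.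
  apply: H; first exact: h1.
  apply: hr; rewrite sub0r normrN distrC; exact: lt_le_trans xf delr.
have := hW f Wf Ff.
have [_ n1] := nx d.
have : `|x d| <= `|f| + `|x d - f|.
  by have := ler_normD f (x d - f); rewrite addrC subrK.
rewrite n1 => ? ?; lra.
Qed.

Lemma iii_i : tau_complementary tau (dist_to F) ->
  zero_tau_separated tau (unit_sphere F).
Proof.
move=> [_ nonet].
case: (pselect (zero_tau_separated tau (unit_sphere F))) => // nsep.
exfalso; apply: nonet.
case: Hlin => -[tauT _ _ tauI] _ _.
pose D := {U : set E | tau U /\ U 0}.
have h : forall U : D, exists y, [/\ (sval U) y, F y & `|y| = 1].
  move=> [U [tU U0]] /=; apply: contrapT => nex; apply: nsep.
  exists U; split; first by exists U; split.
  apply/seteqP; split => // y [Uy [Fy ny]]; apply: nex; by exists y; split.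
have dT : tau setT /\ (setT : set E) 0 by [].
exists D, (fun a b => sval b `<=` sval a), (fun U => sval (cid (h U))).
split.
- split.
  + by exists (exist _ setT dT).
  + by move=> ? ?.
  + by move=> a b c ab bc z /bc /ab.
  + move=> [a [ta a0]] [b [tb b0]].
    have ab : tau (a `&` b) /\ (a `&` b) 0 by split; [apply: tauI | split].
    by exists (exist _ (a `&` b) ab); split => z [].
- by move=> d; have [_ _ ny] := svalP (cid (h d)); split.
- move=> U tU U0; exists (exist _ U (conj tU U0)) => d /= dU.
  by have [dy _ _] := svalP (cid (h d)); apply: dU.
- move=> eps e0; exists (exist _ setT dT) => d _.
  by have [_ Fy _] := svalP (cid (h d)); rewrite dist_F // normr0.
Qed.

End Topo.

Theorem proposition2p6 (R : realType) (E : normedModType R)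
  (tau : set (set E)) (F : set E) :
  is_linear_topology tau -> weaker_than_norm tau -> is_subspace F ->
  [<-> zero_tau_separated tau (unit_sphere F);
       coincide_on tau F;
       tau_complementary tau (dist_to F)].
Proof.
move=> Hlin Hweak [F0 FD FZ].
split; first exact: i_ii.
split; first by move/(@ii_i _ _ tau F F0); apply: i_iii.
exact: iii_i.
Qed.
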